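(* Let $F:[n]^\ell\to\mathbb{R}$ be permutation-invariant. For every $i\in\{1,\dots,\ell\}$, $$\mathbb{E}_{X\in[n]^i}[f_{i,F}(X)^2]=\frac{\eta_i}{\binom{\ell}{i}},$$ and this identity is derivable in degree $2$ sum-of-squares from the permutation-invariance axioms $\{F(x_1,\dots,x_\ell)=F(x_{\pi(1)},\dots,x_{\pi(\ell)})\}$, treating the values $F(X)$ as indeterminates.
   Context: $[n]=\mathbb{Z}/n\mathbb{Z}$, $\chi_T(x)=\prod_j e^{2\pi iT_jx_j/n}$, $\hat F(T)=\mathbb{E}_Y[F(Y)\overline{\chi_T(Y)}]$, $|T|=|\{j:T_j\ne0\}|$. $F_i=\sum_{T:|T|=i}\hat F(T)\chi_T$ and $\eta_i=\mathbb{E}_X[F_i(X)^2]$. $f_{i,F}:[n]^i\to\mathbb{C}$ is $f_{i,F}(x_1,\dots,x_i)=\sum_{(T_1,\dots,T_i)\in([n]\setminus\{0\})^i}\hat F(T_1,\dots,T_i,0,\dots,0)\chi_{T_1,\dots,T_i}(x_1,\dots,x_i)$. $F$ is permutation-invariant if invariant under permuting its $\ell$ coordinates. *)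

(* Defs.v *)
From mathcomp Require Import all_boot all_order all_algebra all_fingroup.
From mathcomp Require Import complex.
From mathcomp Require Import reals trigo.
Set Implicit Arguments. Unset Strict Implicit. Unset Printing Implicit Defensive.
Import GRing.Theory Num.Theory.
Local Open Scope ring_scope.

Section Defs.
Variable R : realType.
Variables n l : nat.

(* points of [n]^m, with [n] = Z/nZ represented by 'I_n *)
Definition pt (m : nat) := {ffun 'I_m -> 'I_n}.

Definition omega : R[i] := (cos (2 * pi / n%:R) +i* sin (2 * pi / n%:R))%C.

Definition chi (m : nat) (T x : pt m) : R[i] :=
  \prod_(j < m) omega ^+ (nat_of_ord (T j) * nat_of_ord (x j))%N.

Definition avg (m : nat) (g : pt m -> R[i]) : R[i] :=
  (#|{: pt m}|%:R)^-1 * \sum_(Y : pt m) g Y.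

Definition fhat (F : pt l -> R) (T : pt l) : R[i] :=
  avg (fun Y => (F Y)%:C%C * (chi T Y)^*).

Definition wt (T : pt l) : nat := #|[set j | nat_of_ord (T j) != 0%N]|.

Definition Flevel (F : pt l -> R) (i : nat) (X : pt l) : R[i] :=
  \sum_(T : pt l | wt T == i) fhat F T * chi T X.

Definition eta (F : pt l -> R) (i : nat) : R[i] :=
  avg (fun X => (Flevel F i X) ^+ 2).

(* f_{i,F}(x_1..x_i) = sum over (T_1..T_i) in ([n]\{0})^i of
   \hat F(T_1,..,T_i,0,..,0) chi_{T_1..T_i}(x_1..x_i).
   The tuples (T_1,..,T_i,0,..,0) are exactly the T : [n]^l with
   T_j <> 0 iff j < i (0-based indices). *)
Definition fcoef (F : pt l -> R) (i : nat) (hil : (i <= l)%N) (x : pt i) : R[i] :=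
  \sum_(T : pt l | [forall j : 'I_l, (nat_of_ord j < i)%N == (nat_of_ord (T j) != 0%N)])
     fhat F T * \prod_(k < i) omega ^+ (nat_of_ord (T (widen_ord hil k)) * nat_of_ord (x k))%N.

Definition perm_pt (x : pt l) (s : 'S_l) : pt l := [ffun j => x (s j)].

Definition perm_invariant (F : pt l -> R) : Prop :=
  forall (x : pt l) (s : 'S_l), F x = F (perm_pt x s).

(* Degree-2 (sum-of-squares / ideal) derivability of the identity  P = 0,
   where P is a polynomial in the indeterminates G(x), x in [n]^l, from the
   degree-1 axioms G(x) - G(perm_pt x s) = 0: P is a combination of the axioms
   with multipliers of degree <= 1 (affine forms in the indeterminates), so that
   every term has degree <= 2.  Polynomial identities over the infinite field R
   are expressed as identities of functions of the (real) indeterminates. *)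
Definition deg2_derivable_from_perm_axioms (P : (pt l -> R) -> R[i]) : Prop :=
  exists (c : pt l -> 'S_l -> R) (a : pt l -> 'S_l -> pt l -> R),
    forall G : pt l -> R,
      P G = ((\sum_(x : pt l) \sum_(s : 'S_l)
               (c x s + \sum_(y : pt l) a x s y * G y) * (G x - G (perm_pt x s)))%:C)%C.

End Defs.

(* Main.v *)
Require Import Defs.
From mathcomp Require Import all_boot all_order all_algebra all_fingroup.
From mathcomp Require Import complex.
From mathcomp Require Import reals trigo.
From mathcomp Require Import ring lra.
From Stdlib Require FunctionalExtensionality.
Set Implicit Arguments. Unset Strict Implicit. Unset Printing Implicit Defensive.
Import Order.TTheory GRing.Theory Num.Theory.
Local Open Scope ring_scope.

Section Omega.
Variable R : realType.
Variable n : nat.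
Hypothesis hn : (0 < n)%N.

Local Notation C := (R[i]).
Local Notation om := (@omega R n).
Local Notation th := (2 * pi / n%:R : R).

Lemma cisX (x : R) k : (cos x +i* sin x)%C ^+ k = (cos (x *+ k) +i* sin (x *+ k))%C.
Proof.
elim: k => [|k IH]; first by rewrite expr0 mulr0n cos0 sin0.
rewrite exprS IH mulrS cosD sinD.
by apply/eqP; rewrite eq_complex /= eqxx addrC eqxx.
Qed.

Lemma omegaX k : om ^+ k = (cos (th *+ k) +i* sin (th *+ k))%C.
Proof. exact: cisX. Qed.

Lemma omegan : om ^+ n = 1.
Proof.
rewrite omegaX.
have -> : th *+ n = pi *+ 2.
  by rewrite -[_ *+ n]mulr_natr divfK ?pnatr_eq0 -?lt0n // mulr_natl.
by rewrite cos2pi sin2pi.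
Qed.

Lemma omegaJ : (om^*)%C * om = 1.
Proof.
rewrite /omega; simpc. by rewrite -!expr2 cos2Dsin2 [sin _ * cos _]mulrC subrr.
Qed.

Lemma omega_neq0 : om != 0.
Proof. apply/negP => /eqP h; move: omegaJ; by rewrite h mulr0 => /eqP; rewrite eq_sym oner_eq0. Qed.

Lemma omegaXmod k : om ^+ k = om ^+ (k %% n).
Proof. by rewrite {1}(divn_eq k n) exprD mulnC exprM omegan expr1n mul1r. Qed.

Lemma omegaX_neq1 k : (0 < k < n)%N -> om ^+ k != 1.
Proof.
move=> /andP[k0 kn]; rewrite omegaX; apply/negP => /eqP[hc _].
have n0 : (0 < n%:R :> R) by rewrite ltr0n.
have x0 : 0 < th *+ k.
  by rewrite mulrn_wgt0 // divr_gt0 // mulr_gt0 // pi_gt0.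
have thn : th *+ n = pi *+ 2.
  by rewrite -[_ *+ n]mulr_natr divfK ?pnatr_eq0 -?lt0n // mulr_natl.
have th0 : 0 < th by rewrite divr_gt0 // mulr_gt0 // pi_gt0.
have x2 : th *+ k < pi *+ 2.
  by rewrite -thn -[th *+ k]mulr_natr -[th *+ n]mulr_natr ltr_pM2l // ltr_nat.
have c0 : cos (0 : R) = 1 by rewrite cos0.
have pi0 : (0:R) \in `[0, pi] by rewrite in_itv /= lexx pi_ge0.
case: (lerP (th *+ k) pi) => hx.
  have : th *+ k = 0.
    apply: cos_inj => //; first by rewrite in_itv /= (ltW x0) hx.
    by rewrite hc c0.
  by move=> e; move: x0; rewrite e ltxx.
have : pi *+ 2 - th *+ k = 0.
  apply: cos_inj => //.
    rewrite in_itv /=; move: x2 hx; rewrite mulr2n => x2 hx.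
    apply/andP; split; lra.
  by rewrite cosB cos2pi sin2pi mul1r mul0r addr0 hc c0.
by move/eqP; rewrite subr_eq0 => /eqP e; move: x2; rewrite e ltxx.
Qed.

Lemma orth k : \sum_(y < n) om ^+ (k * y)%N = if (n %| k)%N then n%:R else 0.
Proof.
under eq_bigr do rewrite exprM.
case: ifP => hk.
  have -> : om ^+ k = 1 by rewrite omegaXmod (eqP hk) expr0.
  by rewrite (eq_bigr (fun _ => 1)) ?sumr_const ?card_ord // => y _; rewrite expr1n.
have w1 : om ^+ k - 1 != 0.
  rewrite subr_eq0 omegaXmod omegaX_neq1 // ltn_pmod // andbT lt0n.
  by rewrite -/(dvdn n k) hk.
apply/eqP; rewrite -(mulrI_eq0 _ (mulfI w1)) -subrX1 -exprM mulnC exprM omegan.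
by rewrite expr1n subrr.
Qed.

End Omega.

Section Chi.
Variable R : realType.
Variable n : nat.
Hypothesis hn : (0 < n)%N.

Local Notation C := (R[i]).
Local Notation om := (@omega R n).

Lemma card_pt m : #|{: pt n m}| = (n ^ m)%N.
Proof. by rewrite card_ffun !card_ord. Qed.

Lemma chi_mul m (T S X : pt n m) :
  chi R T X * chi R S X = \prod_(j < m) om ^+ ((T j + S j) * X j)%N.
Proof.
rewrite /chi -big_split /=; apply: eq_bigr => j _.
by rewrite -exprD mulnDl.
Qed.

Lemma prod_if m (P : pred 'I_m) (c : C) :
  \prod_(j < m) (if P j then c else 0) = if [forall j, P j] then c ^+ m else 0.
Proof.
case: ifP => [/forallP h|/negbT]; first by rewrite (eq_bigr (fun _ => c)) ?prodr_const ?card_ord // => j _; rewrite h.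
rewrite negb_forall => /existsP[j hj].
by rewrite (bigD1 j) //= (negbTE hj) mul0r.
Qed.

Lemma sum_chi2 m (T S : pt n m) :
  \sum_(X : pt n m) chi R T X * chi R S X =
  if [forall j, n %| T j + S j]%N then (n%:R : C) ^+ m else 0.
Proof.
under eq_bigr do rewrite chi_mul.
rewrite -(bigA_distr_bigA (fun j (y : 'I_n) => om ^+ ((T j + S j) * y)%N)).
rewrite -prod_if; apply: eq_bigr => j _.
exact: orth.
Qed.

Lemma avg_sq m (I : finType) (P : pred I) (a : I -> C) (g : I -> pt n m) :
  avg (fun X : pt n m => (\sum_(T | P T) a T * chi R (g T) X) ^+ 2) =
  \sum_(T | P T) \sum_(S | P S) a T * a S * ([forall j, n %| g T j + g S j]%N)%:R.
Proof.
rewrite /avg card_pt natrX.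
have nz : (n%:R : C) ^+ m != 0 by rewrite expf_neq0 // pnatr_eq0 -lt0n.
under eq_bigr do rewrite expr2 mulr_suml.
under eq_bigr do under eq_bigr do rewrite mulr_sumr.
rewrite exchange_big mulr_sumr; apply: eq_bigr => T PT.
rewrite exchange_big mulr_sumr; apply: eq_bigr => S PS.
have -> : \sum_(X : pt n m) a T * chi R (g T) X * (a S * chi R (g S) X)
   = a T * a S * \sum_(X : pt n m) chi R (g T) X * chi R (g S) X.
  rewrite mulr_sumr; apply: eq_bigr => X _; rewrite !mulrA; congr (_ * _).
  by rewrite -!mulrA [chi R _ _ * _]mulrC.
rewrite sum_chi2 mulrCA; congr (_ * _).
by case: ifP => _; rewrite ?mulVf ?mulr0.
Qed.

End Chi.

Section Neg.
Variable R : realType.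
Variable n : nat.
Hypothesis hn : (0 < n)%N.

Local Notation C := (R[i]).
Local Notation om := (@omega R n).

Definition negT m (T : pt n m) : pt n m :=
  [ffun j => Ordinal (ltn_pmod (n - T j) hn)].

Lemma negT_val m (T : pt n m) j : nat_of_ord (negT T j) = ((n - T j) %% n)%N.
Proof. by rewrite ffunE. Qed.

Lemma negn_eq0 (t : nat) : (t < n)%N -> (((n - t) %% n)%N == 0%N) = (t == 0%N).
Proof.
move=> tn; case: (posnP t) => [->|t0]; first by rewrite subn0 modnn eqxx.
rewrite modn_small; last by rewrite ltn_subrL t0 hn.
by rewrite subn_eq0 leqNgt tn /=.
Qed.

Lemma negnK (t : nat) : (t < n)%N -> ((n - (n - t) %% n) %% n)%N = t.
Proof.
move=> tn; case: (posnP t) => [->|t0]; first by rewrite subn0 modnn subn0 modnn.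
rewrite (modn_small (m := n - t)); last by rewrite ltn_subrL t0 hn.
by rewrite subKn ?modn_small // ltnW.
Qed.

Lemma negTK m : involutive (@negT m).
Proof. by move=> T; apply/ffunP => j; apply: val_inj; rewrite /= !negT_val negnK. Qed.

Lemma negT_inj m : injective (@negT m).
Proof. exact: inv_inj (@negTK m). Qed.

Lemma negT_neq0 m (T : pt n m) j : (nat_of_ord (negT T j) != 0%N) = (nat_of_ord (T j) != 0%N).
Proof. by rewrite negT_val negn_eq0. Qed.

Lemma conj_omX a b : (a < n)%N -> ((om ^+ (a * b))^*)%C = om ^+ (((n - a) %% n) * b).
Proof.
move=> an.
have u0 : om ^+ (a * b) != 0 by rewrite expf_neq0 // omega_neq0.
apply: (mulIf u0).
rewrite rmorphXn -exprMn omegaJ expr1n -exprD -mulnDl omegaXmod.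
rewrite -modnMml modnDml subnK; last exact: ltnW.
by rewrite modnn mul0n mod0n expr0.
exact: hn.
Qed.

Lemma conj_chi m (T X : pt n m) : ((chi R T X)^*)%C = chi R (negT T) X.
Proof.
rewrite /chi rmorph_prod; apply: eq_bigr => j _.
by rewrite negT_val; apply: conj_omX.
Qed.

Lemma NconjE (x : C) : (x^*)%R = (x^*)%C.
Proof. by []. Qed.

Lemma conj_avg m (g : pt n m -> C) : ((avg g)^*)%C = avg (fun X => ((g X)^*)%C).
Proof. by rewrite /avg rmorphM fmorphV rmorph_nat rmorph_sum. Qed.

Lemma conj_fhat l (F : pt n l -> R) (T : pt n l) : ((fhat F T)^*)%C = fhat F (negT T).
Proof.
rewrite /fhat conj_avg; congr avg; apply: FunctionalExtensionality.functional_extensionality => Y.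
rewrite rmorphM /= oppr0 !NconjE conjcK conj_chi negTK. done.
Qed.

Lemma real_sum l m (F : pt n l -> R) (P : pred (pt n l)) (g : pt n l -> pt n m) X :
  (forall T, P (negT T) = P T) -> (forall T, g (negT T) = negT (g T)) ->
  ((\sum_(T | P T) fhat F T * chi R (g T) X)^*)%C = \sum_(T | P T) fhat F T * chi R (g T) X.
Proof.
move=> hP hg; rewrite rmorph_sum.
rewrite [RHS](reindex_inj (@negT_inj l)) /=.
apply: eq_big => [T|T _]; first by rewrite hP.
by rewrite rmorphM /= conj_fhat conj_chi hg.
Qed.

End Neg.

Section PermSet.
Variable T : finType.

Lemma preim1 (B : {set T}) : (1%g : {perm T}) @^-1: B = B.
Proof. by apply/setP => x; rewrite !inE perm1. Qed.

Lemma preimM (s t : {perm T}) (B : {set T}) : (s * t)%g @^-1: B = s @^-1: (t @^-1: B).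
Proof. by apply/setP => x; rewrite !inE permM. Qed.

Lemma preim_perm_eq (A B : {set T}) (s : {perm T}) : (s @^-1: A == s @^-1: B) = (A == B).
Proof.
apply/eqP/eqP => [h|->//]; apply/setP => x.
by move/setP: h => /(_ (s^-1 x)%g); rewrite !inE permKV.
Qed.

Lemma eq_card_sub (A B : {set T}) : #|A| = #|B| -> A :\: B = set0 -> A = B.
Proof.
move=> hc h; apply/eqP; rewrite eqEcard hc leqnn andbT.
by rewrite -setD_eq0 h.
Qed.

Lemma exists_perm k : forall A B : {set T}, #|A :\: B| = k -> #|A| = #|B| ->
  exists s : {perm T}, A = s @^-1: B.
Proof.
elim: k => [|k IH] A B hk hc.
  exists 1%g; rewrite preim1; apply: eq_card_sub => //.
  by apply/eqP; rewrite -cards_eq0 hk.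
have : A :\: B != set0 by rewrite -card_gt0 hk.
case/set0Pn => a; rewrite inE => /andP[aB aA].
have : B :\: A != set0.
  apply/negP => /eqP h; move: (eq_card_sub (esym hc) h) => e.
  by move: aB; rewrite e aA.
case/set0Pn => b; rewrite inE => /andP[bA bB].
set t := tperm a b.
have hA' : #|(t @^-1: A) :\: B| = k.
  have -> : (t @^-1: A) :\: B = (A :\: B) :\ a.
    apply/setP => x; rewrite !inE.
    rewrite /t; case: tpermP => [->|->|xa xb].
    - by rewrite eqxx (negbTE bA) andbF.
    - by rewrite bB /= andbF.
    - by move/eqP/negbTE: xa => ->.
  by move: hk; rewrite (cardsD1 a) !inE aB aA /= add1n => -[].
have hc' : #|t @^-1: A| = #|B| by rewrite card_preimset ?hc //; exact: perm_inj.
case: (IH _ _ hA' hc') => s hs.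
exists (t * s)%g; rewrite preimM -hs.
by apply/setP => x; rewrite !inE tpermK.
Qed.

End PermSet.

Section Main.
Variable R : realType.
Variables n l : nat.
Hypothesis hn : (0 < n)%N.

Local Notation C := (R[i]).

Definition supp (T : pt n l) : {set 'I_l} := [set j | nat_of_ord (T j) != 0%N].
Definition DD (T S : pt n l) : bool := [forall j, n %| T j + S j]%N.

Definition Phi (F : pt n l -> R) (U : {set 'I_l}) : C :=
  \sum_(T | supp T == U) \sum_(S | supp S == U) fhat F T * fhat F S * (DD T S)%:R.

Lemma dvd_eq0 (a b : nat) : (a < n)%N -> (b < n)%N -> (n %| a + b)%N -> (a == 0%N) = (b == 0%N).
Proof.
move=> an bn h.
have key : forall x : nat, (x < n)%N -> (n %| x)%N -> x = 0%N.
  move=> x xn hx; case: (posnP x) => // x0.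
  by move: (dvdn_leq x0 hx); rewrite leqNgt xn.
case: (eqVneq a 0%N) => [ea|na]; case: (eqVneq b 0%N) => [eb|nb].
- by rewrite ?ea ?eb.
- by move: h; rewrite ea add0n => /(key _ bn) eb; move: nb; rewrite eb eqxx.
- by move: h; rewrite eb addn0 => /(key _ an) ea; move: na; rewrite ea eqxx.
- by rewrite ?(negbTE na) ?(negbTE nb).
Qed.

Lemma DD_supp T S : DD T S -> supp S = supp T.
Proof.
move/forallP => h; apply/setP => j; rewrite !inE.
by rewrite (dvd_eq0 (ltn_ord _) (ltn_ord _) (h j)).
Qed.

Lemma eta_Phi (F : pt n l -> R) i :
  eta F i = \sum_(U : {set 'I_l} | #|U| == i) Phi F U.
Proof.
rewrite /eta /Flevel (avg_sq hn (fun T => wt T == i) (fun T => fhat F T) (fun T => T)).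
rewrite (partition_big supp (fun U : {set 'I_l} => #|U| == i)) //.
apply: eq_bigr => U /eqP hU.
rewrite /Phi; apply: eq_big => [T|T /andP[_ /eqP hT]].
  rewrite /wt; apply/andP/eqP => [[_ /eqP]//| hT]; split=> //.
  by rewrite -/(supp T) hT hU.
by apply/eqP.

rewrite big_mkcond [RHS]big_mkcond; apply: eq_bigr => S _.
rewrite -/(DD T S); case hD : (DD T S); last by rewrite !mulr0 !if_same.
have hS := DD_supp hD.
by rewrite /wt -/(supp S) hS hT hU !eqxx.
Qed.


Definition restr i (hil : (i <= l)%N) (T : pt n l) : pt n i := [ffun k => T (widen_ord hil k)].

Definition Apred i (T : pt n l) : bool :=
  [forall j : 'I_l, (nat_of_ord j < i)%N == (nat_of_ord (T j) != 0%N)].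

Definition U0 i : {set 'I_l} := [set j : 'I_l | (nat_of_ord j < i)%N].

Lemma fcoefE (F : pt n l -> R) i (hil : (i <= l)%N) (x : pt n i) :
  fcoef F hil x = \sum_(T | Apred i T) fhat F T * chi R (restr hil T) x.
Proof.
rewrite /fcoef; apply: eq_bigr => T _; congr (_ * _).
by rewrite /chi; apply: eq_bigr => k _; rewrite ffunE.
Qed.

Lemma Apred_supp i T : Apred i T = (supp T == U0 i).
Proof.
apply/forallP/eqP => [h|h j].
  by apply/setP => j; rewrite !inE (eqP (h j)).
by apply/eqP; move/setP: h => /(_ j); rewrite !inE.
Qed.

Lemma fcoef_Phi (F : pt n l -> R) i (hil : (i <= l)%N) :
  avg (fun X : pt n i => (fcoef F hil X) ^+ 2) = Phi F (U0 i).
Proof.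
rewrite (_ : (fun X : pt n i => fcoef F hil X ^+ 2) =
  (fun X => (\sum_(T | Apred i T) fhat F T * chi R (restr hil T) X) ^+ 2)); last first.
  by apply: FunctionalExtensionality.functional_extensionality => X; rewrite fcoefE.
rewrite (avg_sq hn (Apred i) (fun T => fhat F T) (restr hil)).
rewrite /Phi; apply: eq_big => [T|T hT]; first by rewrite Apred_supp.
apply: eq_big => [S|S hS]; first by rewrite Apred_supp.
congr (_ * _%:R); congr nat_of_bool.
rewrite Apred_supp in hT; rewrite Apred_supp in hS.
rewrite /DD; apply/idP/idP => /forallP h; apply/forallP => j.
  case: (ltnP j i) => hj.
    have := h (Ordinal hj); rewrite !ffunE.
    by have -> : widen_ord hil (Ordinal hj) = j by apply: val_inj.
  have hT0 : j \notin supp T by rewrite (eqP hT) inE -leqNgt.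
  have hS0 : j \notin supp S by rewrite (eqP hS) inE -leqNgt.
  by move: hT0 hS0; rewrite !inE !negbK => /eqP -> /eqP ->.
by rewrite !ffunE; apply: h.
Qed.


Lemma perm_pt_inj (s : 'S_l) : injective (fun x : pt n l => perm_pt x s).
Proof.
move=> x y h; apply/ffunP => j.
by move/ffunP: h => /(_ (s^-1 j)%g); rewrite !ffunE permKV.
Qed.

Lemma perm_ptM (x : pt n l) (s t : 'S_l) : perm_pt (perm_pt x s) t = perm_pt x (t * s)%g.
Proof. by apply/ffunP => j; rewrite !ffunE permM. Qed.

Lemma perm_pt1 (x : pt n l) : perm_pt x 1%g = x.
Proof. by apply/ffunP => j; rewrite !ffunE perm1. Qed.

Lemma chi_perm (T Y : pt n l) (s : 'S_l) :
  chi R (perm_pt T s) Y = chi R T (perm_pt Y s^-1%g).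
Proof.
rewrite /chi [RHS](reindex_inj (@perm_inj _ s)) /=.
by apply: eq_bigr => j _; rewrite !ffunE permK.
Qed.

Lemma fhat_perm (F : pt n l -> R) (hF : perm_invariant F) (T : pt n l) (s : 'S_l) :
  fhat F (perm_pt T s) = fhat F T.
Proof.
rewrite /fhat /avg; congr (_ * _).
rewrite (reindex_inj (@perm_pt_inj s)) /=; apply: eq_bigr => Z _.
by rewrite chi_perm perm_ptM mulVg perm_pt1 -hF.
Qed.

Lemma supp_perm (T : pt n l) (s : 'S_l) : supp (perm_pt T s) = s @^-1: supp T.
Proof. by apply/setP => j; rewrite !inE ffunE. Qed.

Lemma DD_perm (T S : pt n l) (s : 'S_l) : DD (perm_pt T s) (perm_pt S s) = DD T S.
Proof.
apply/forallP/forallP => h j; last by rewrite !ffunE; apply: h.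
by move: (h (s^-1 j)%g); rewrite !ffunE permKV.
Qed.

Lemma Phi_perm (F : pt n l -> R) (hF : perm_invariant F) (U : {set 'I_l}) (s : 'S_l) :
  Phi F (s @^-1: U) = Phi F U.
Proof.
rewrite /Phi (reindex_inj (@perm_pt_inj s)) /=.
apply: eq_big => [T|T _]; first by rewrite supp_perm preim_perm_eq.
rewrite (reindex_inj (@perm_pt_inj s)) /=.
apply: eq_big => [S|S _]; first by rewrite supp_perm preim_perm_eq.
by rewrite !fhat_perm // DD_perm.
Qed.

Lemma card_U0 i (hil : (i <= l)%N) : #|U0 i| = i.
Proof.
have -> : U0 i = [set widen_ord hil k | k : 'I_i].
  apply/setP => j; rewrite !inE; apply/idP/imsetP => [hj|[k _ ->]] //.
  by exists (Ordinal hj) => //; apply: val_inj.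
  exact: (ltn_ord k).
have winj : injective (widen_ord hil).
  by move=> a b /(congr1 val) /= h; apply: val_inj.

by rewrite card_imset // card_ord.
Qed.

Lemma part1 (F : pt n l -> R) (hF : perm_invariant F) i (hil : (i <= l)%N) :
  avg (fun X : pt n i => (fcoef F hil X) ^+ 2) = eta F i / ('C(l, i))%:R.
Proof.
rewrite fcoef_Phi eta_Phi.
have h : forall U : {set 'I_l}, #|U| == i -> Phi F U = Phi F (U0 i).
  move=> U /eqP hU.
  have hc : #|U| = #|U0 i| by rewrite card_U0.
  case: (exists_perm (erefl #|U :\: U0 i|) hc) => s ->.
  exact: Phi_perm.
rewrite (eq_bigr _ h).
rewrite (eq_bigl (fun U => U \in [set U : {set 'I_l} | #|U| == i])); last by move=> U; rewrite inE.
rewrite sumr_const card_draws card_ord -[_ *+ 'C(l, i)]mulr_natr mulfK //.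
by rewrite pnatr_eq0 -lt0n bin_gt0.
Qed.

End Main.

Section Part2.
Variable R : realType.
Variables n l : nat.
Hypothesis hn : (0 < n)%N.

Local Notation C := (R[i]).
Local Notation P := (pt n l).

Definition kk (T y : P) : C := (#|{: P}|%:R)^-1 * ((chi R T y)^*)%C.

Lemma fhatE (G : P -> R) T : fhat G T = \sum_y (G y)%:C%C * kk T y.
Proof.
rewrite /fhat /avg mulr_sumr; apply: eq_bigr => y _.
by rewrite /kk mulrCA.
Qed.

Lemma bilin (G : P -> R) (PT PS : pred P) (ka : P -> P -> C) :
  \sum_(T | PT T) \sum_(S | PS S) fhat G T * fhat G S * ka T S =
  \sum_y \sum_z (G y)%:C%C * (G z)%:C%C *
     (\sum_(T | PT T) \sum_(S | PS S) kk T y * kk S z * ka T S).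
Proof.
transitivity (\sum_(T | PT T) \sum_(S | PS S) \sum_y \sum_z
   (G y)%:C%C * (G z)%:C%C * (kk T y * kk S z * ka T S)).
  apply: eq_bigr => T _; apply: eq_bigr => S _.
  rewrite !fhatE big_distrlr mulr_suml; apply: eq_bigr => y _.
  rewrite mulr_suml; apply: eq_bigr => z _.
  move: (kk T y) (kk S z) (ka T S) ((G y)%:C%C) ((G z)%:C%C) => a b c d e.
  transitivity ((d * a) * (e * b) * c); first by [].
  ring.
under eq_bigr do rewrite exchange_big.
under eq_bigr do under eq_bigr do rewrite exchange_big.
rewrite exchange_big.
under eq_bigr do rewrite exchange_big.
apply: eq_bigr => y _; apply: eq_bigr => z _.
rewrite mulr_sumr; apply: eq_bigr => T _.
by rewrite mulr_sumr.
Qed.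


Variables (i : nat) (hil : (i <= l)%N).

Definition Qf (G : P -> R) : C :=
  avg (fun X : pt n i => (fcoef G hil X) ^+ 2) - eta G i / ('C(l, i))%:R.

Definition qa (y z : P) : C :=
  \sum_(T | supp T == U0 l i) \sum_(S | supp S == U0 l i) kk T y * kk S z * (DD T S)%:R.
Definition qb (y z : P) : C :=
  \sum_(T | wt T == i) \sum_(S | wt S == i) kk T y * kk S z * (DD T S)%:R.
Definition qq (y z : P) : C := qa y z - qb y z / ('C(l, i))%:R.

Lemma Qrep (G : P -> R) :
  Qf G = \sum_y \sum_z (G y)%:C%C * (G z)%:C%C * qq y z.
Proof.
rewrite /Qf (fcoef_Phi hn) /Phi (bilin _ _ _ (fun T S => (DD T S)%:R)).
rewrite /eta /Flevel (avg_sq hn (fun T => wt T == i) (fun T => fhat G T) (fun T => T)).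
rewrite (bilin _ _ _ (fun T S => (DD T S)%:R)).
rewrite mulr_suml -sumrB; apply: eq_bigr => y _.
rewrite mulr_suml -sumrB; apply: eq_bigr => z _.
by rewrite /qq mulrBr mulrA.
Qed.


Definition NN : R := (#|{: 'S_l}|)%:R.

Lemma NN_neq0 : NN != 0.
Proof.
rewrite /NN pnatr_eq0 -lt0n; apply/card_gt0P; by exists 1%g.
Qed.

Definition Sym (G : P -> R) : P -> R := fun x => NN^-1 * \sum_(s : 'S_l) G (perm_pt x s).

Lemma Sym_inv G : perm_invariant (Sym G).
Proof.
move=> x t; rewrite /Sym; congr (_ * _).
rewrite [RHS](eq_bigr (fun s => G (perm_pt x (s * t)%g))); last by move=> s _; rewrite perm_ptM.
by rewrite (reindex_inj (mulIg t)).
Qed.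

Lemma QH0 G : Qf (Sym G) = 0.
Proof. by rewrite /Qf (part1 hn (Sym_inv G) hil) subrr. Qed.

Lemma Qdiff (G : P -> R) :
  Qf G = \sum_y ((G y)%:C%C - (Sym G y)%:C%C) *
     (\sum_z (G z)%:C%C * qq y z + \sum_w (Sym G w)%:C%C * qq w y).
Proof.
rewrite -[Qf G]subr0 -[X in _ - X](QH0 G) !Qrep.
set g := fun y => (G y)%:C%C; set h := fun y => (Sym G y)%:C%C.
transitivity (\sum_y \sum_z ((g y - h y) * g z * qq y z) +
              \sum_y \sum_z ((g z - h z) * h y * qq y z)).
  rewrite -sumrB -big_split; apply: eq_bigr => y _.
  rewrite -sumrB -big_split; apply: eq_bigr => z _.
  rewrite /g /h; move: (G y)%:C%C (G z)%:C%C (Sym G y)%:C%C (Sym G z)%:C%C (qq y z).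
  move=> a b c d e.
  by transitivity ((a - c) * b * e + (b - d) * c * e); [ring | by []].
rewrite [X in _ + X]exchange_big -big_split; apply: eq_bigr => y _ /=.
rewrite /g /h.
rewrite mulrDr !mulr_sumr; congr (_ + _); apply: eq_bigr => z _.
  by rewrite mulrA.
move: (G y)%:C%C (Sym G y)%:C%C (Sym G z)%:C%C (qq z y) => a b c d.
by transitivity ((a - b) * (c * d)); [ring | by []].
Qed.


Lemma ReD (a b : C) : complex.Re (a + b) = complex.Re a + complex.Re b.
Proof. by case: a => ? ?; case: b => ? ?. Qed.

Lemma Re_sum (I : finType) (Q : pred I) (f : I -> C) :
  complex.Re (\sum_(j | Q j) f j) = \sum_(j | Q j) complex.Re (f j).
Proof. exact: (big_morph (@complex.Re R) ReD). Qed.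

Lemma ReMl (x : R) (w : C) : complex.Re (x%:C%C * w) = x * complex.Re w.
Proof. by case: w => a c /=; rewrite mul0r subr0. Qed.

Lemma ReMr (x : R) (w : C) : complex.Re (w * x%:C%C) = complex.Re w * x.
Proof. by case: w => a c /=; rewrite mulr0 subr0. Qed.

Lemma real_Re (z : C) : (z^*)%C = z -> z = (complex.Re z)%:C%C.
Proof.
case: z => a b /= [] h; congr Complex.
lra.
Qed.


Definition NC : C := (NN%:C)%C.

Lemma SymC (G : P -> R) w : (Sym G w)%:C%C = NC^-1 * \sum_(t : 'S_l) (G (perm_pt w t))%:C%C.
Proof. by rewrite /Sym rmorphM /= fmorphV rmorph_sum. Qed.

Lemma diffSym (G : P -> R) y :
  (G y)%:C%C - (Sym G y)%:C%C = \sum_(s : 'S_l) NC^-1 * (G y - G (perm_pt y s))%:C%C.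
Proof.
have hR : G y - Sym G y = \sum_(s : 'S_l) NN^-1 * (G y - G (perm_pt y s)).
  rewrite -mulr_sumr sumrB sumr_const /Sym mulrBr -[G y *+ _]mulr_natr.
  by rewrite mulrCA mulVf ?NN_neq0 // mulr1.
rewrite -rmorphB hR rmorph_sum; apply: eq_bigr => s _.
by rewrite rmorphM /= fmorphV.
Qed.

Lemma M_rep (G : P -> R) y :
  \sum_z (G z)%:C%C * qq y z + \sum_w (Sym G w)%:C%C * qq w y =
  \sum_v (G v)%:C%C * (qq y v + NC^-1 * \sum_(t : 'S_l) qq (perm_pt v t^-1%g) y).
Proof.
have -> : \sum_w (Sym G w)%:C%C * qq w y =
    \sum_v (G v)%:C%C * (NC^-1 * \sum_(t : 'S_l) qq (perm_pt v t^-1%g) y).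
  under eq_bigr do rewrite SymC -mulrA mulr_suml.
  rewrite -mulr_sumr exchange_big /=.
  have e : forall (t : 'S_l) (v : P), perm_pt (perm_pt v t^-1%g) t = v.
    by move=> t v; rewrite perm_ptM mulgV perm_pt1.
  have e2 : forall t : 'S_l, \sum_w (G (perm_pt w t))%:C%C * qq w y =
      \sum_v (G v)%:C%C * qq (perm_pt v t^-1%g) y.
    move=> t; rewrite (reindex_inj (@perm_pt_inj _ _ t^-1%g)) /=.
    by apply: eq_bigr => v _; rewrite e.
  under eq_bigr do rewrite e2.
  rewrite exchange_big mulr_sumr; apply: eq_bigr => v _.
  by rewrite -mulr_sumr mulrCA.
by rewrite -big_split; apply: eq_bigr => v _ /=; rewrite -mulrDr.
Qed.

Definition beta (y v : P) : C := NC^-1 * (qq y v + NC^-1 * \sum_(t : 'S_l) qq (perm_pt v t^-1%g) y).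

Lemma star (G : P -> R) :
  Qf G = \sum_y \sum_(s : 'S_l) (G y - G (perm_pt y s))%:C%C * \sum_v beta y v * (G v)%:C%C.
Proof.
rewrite Qdiff; apply: eq_bigr => y _.
rewrite diffSym M_rep mulr_suml; apply: eq_bigr => s _.
rewrite -mulrA mulrCA; congr (_ * _).
rewrite mulr_sumr; apply: eq_bigr => v _.
by rewrite /beta mulrCA [_ * (G v)%:C%C]mulrC.
Qed.


Lemma supp_negT (T : P) : supp (negT hn T) = supp T.
Proof. by apply/setP => j; rewrite !inE negT_neq0. Qed.

Lemma fcoef_real (G : P -> R) (X : pt n i) : ((fcoef G hil X)^*)%C = fcoef G hil X.
Proof.
rewrite fcoefE; apply: real_sum => T.
  by rewrite !Apred_supp supp_negT.
by apply/ffunP => k; apply: val_inj; rewrite !ffunE /=.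
Qed.

Lemma Flevel_real (G : P -> R) (X : P) : ((Flevel G i X)^*)%C = Flevel G i X.
Proof.
rewrite /Flevel; apply: (@real_sum R n hn l l G (fun T => wt T == i) (fun T => T) X) => T //.
by rewrite /wt -/(supp T) -/(supp (negT hn T)) supp_negT.
Qed.

Lemma Qreal (G : P -> R) : ((Qf G)^*)%C = Qf G.
Proof.
have h1 : ((avg (fun X : pt n i => fcoef G hil X ^+ 2))^*)%C = avg (fun X : pt n i => fcoef G hil X ^+ 2).
  rewrite conj_avg; congr avg.
  apply: FunctionalExtensionality.functional_extensionality => X.
  by rewrite rmorphXn /= fcoef_real.
have h2 : ((eta G i)^*)%C = eta G i.
  rewrite /eta conj_avg; congr avg.
  apply: FunctionalExtensionality.functional_extensionality => X.
  by rewrite rmorphXn /= Flevel_real.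
rewrite /Qf rmorphB /= h1 fmorph_div /= h2.
by rewrite conjc_nat.
Qed.

Lemma part2 : deg2_derivable_from_perm_axioms
       (fun G : pt n l -> R =>
          avg (fun X : pt n i => (fcoef G hil X) ^+ 2) - eta G i / ('C(l, i))%:R).
Proof.
exists (fun _ _ => 0), (fun x _ y => complex.Re (beta x y)) => G.
rewrite -/(Qf G) [LHS](real_Re (Qreal G)); congr (_%:C)%C.
rewrite star Re_sum; apply: eq_bigr => x _.
rewrite Re_sum; apply: eq_bigr => s _.
rewrite ReMl add0r mulrC Re_sum; congr (_ * _).
by apply: eq_bigr => y _; rewrite ReMr.
Qed.

End Part2.

Unset Implicit Arguments.

Theorem lemmaC11 (R : realType) (n l : nat) (hn : (0 < n)%N)
    (F : pt n l -> R) (hF : perm_invariant F)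
    (i : nat) (hi1 : (1 <= i)%N) (hil : (i <= l)%N) :
  avg (fun X : pt n i => (fcoef F hil X) ^+ 2) = eta F i / ('C(l, i))%:R
  /\ deg2_derivable_from_perm_axioms
       (fun G : pt n l -> R =>
          avg (fun X : pt n i => (fcoef G hil X) ^+ 2) - eta G i / ('C(l, i))%:R).
Proof.
split; first exact: (part1 hn hF hil).
exact: part2.
Qed.
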